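(* Let $P\in\mathbb{R}^{m\times m}$ be symmetric, stochastic and positive semidefinite, let $\mathcal{X}\subseteq\mathbb{R}^n$ be a closed convex set, let $p\ge1$ and $\sigma=\min\{1,n^{\frac2p-1}\}$. Then for all $\bm{u}=[u_1^\top,\dots,u_m^\top]^\top$ and $\bm{v}=[v_1^\top,\dots,v_m^\top]^\top$ in $\mathcal{X}^m$, $$\big\|((I_m-P)\otimes I_n)\bm{u}\big\|_2^2\le\frac1\sigma\sum_{i,j=1}^mP_{ij}\|v_i-u_j\|_p^2.$$
   Context: $\otimes$ denotes the Kronecker product, $I_k$ the $k\times k$ identity, $\|\cdot\|_p$ the $\ell_p$-norm. Stochastic means nonnegative entries with row sums 1. *)

(* Defs.v *)
From HB Require Import structures.
From mathcomp Require Import all_boot all_order all_algebra.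
From mathcomp Require Import all_classical all_reals all_analysis.
From mathcomp Require Export mxtens.
Set Implicit Arguments. Unset Strict Implicit. Unset Printing Implicit Defensive.
Import Order.TTheory GRing.Theory Num.Theory.
Import numFieldNormedType.Exports.
Local Open Scope ring_scope.
Local Open Scope classical_set_scope.

Definition lpnorm {R : realType} {n : nat} (p : R) (x : 'cV[R]_n) : R :=
  (\sum_(k < n) `|x k 0| `^ p) `^ p^-1.

Definition stochastic {R : realType} {m : nat} (P : 'M[R]_m) : Prop :=
  (forall i j, 0 <= P i j) /\ (forall i, \sum_(j < m) P i j = 1).

Definition symmetric_mx {R : realType} {m : nat} (P : 'M[R]_m) : Prop :=
  P^T = P.

Definition psd_mx {R : realType} {m : nat} (P : 'M[R]_m) : Prop :=
  forall x : 'cV[R]_m, 0 <= (x^T *m P *m x) 0 0.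

(* Stacked vector [u_1^T, ..., u_m^T]^T in R^(m n); block i is u_i
   (coordinate (i,k) is at index i*n + k, matching the Kronecker product
   convention of tensmx from mathcomp real_closed mxtens). *)
Definition stack {R : realType} {m n : nat} (u : 'I_m -> 'cV[R]_n)
  : 'cV[R]_(m * n) :=
  \col_k u (mxtens_unindex k).1 (mxtens_unindex k).2 0.

(* Main.v *)
Require Import Defs.
From HB Require Import structures.
From mathcomp Require Import all_boot all_order all_algebra.
From mathcomp Require Import all_classical all_reals all_analysis.
From mathcomp Require Import mxtens.
From mathcomp Require Import ring lra.
Set Implicit Arguments. Unset Strict Implicit.
Import Order.TTheory GRing.Theory Num.Theory.
Import numFieldNormedType.Exports.
Local Open Scope ring_scope.
Local Open Scope classical_set_scope.
Section K.
Variable R : realType.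
Variable m : nat.
Implicit Types (M : 'M[R]_m) (x : 'cV[R]_m).

Lemma qfE M x : (x^T *m M *m x) 0 0 = \sum_i \sum_j x i 0 * M i j * x j 0.
Proof.
rewrite mxE exchange_big /=; apply: eq_bigr => j _.
rewrite mxE mulr_suml; apply: eq_bigr => i _; by rewrite mxE.
Qed.

Lemma sqE x : (x^T *m x) 0 0 = \sum_i x i 0 ^+ 2.
Proof. by rewrite mxE; apply: eq_bigr => i _; rewrite mxE expr2. Qed.

Lemma colsum M : stochastic M -> symmetric_mx M -> forall j, \sum_i M i j = 1.
Proof.
move=> [_ hs] hsym j; rewrite -(hs j); apply: eq_bigr => i _.
by rewrite -{1}hsym mxE.
Qed.

Lemma qfI x : (x^T *m 1%:M *m x) 0 0 = \sum_i x i 0 ^+ 2.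
Proof. by rewrite mulmx1 sqE. Qed.

Lemma psdIP M : stochastic M -> symmetric_mx M -> forall x,
  0 <= (x^T *m (1%:M - M) *m x) 0 0.
Proof.
move=> hst hsym x.
have [hnn hrow] := hst.
have hcol := colsum hst hsym.
have eB : forall A B : 'M[R]_1, (A - B) 0 0 = A 0 0 - B 0 0 by move=> A B; rewrite !mxE.
rewrite mulmxBr mulmxBl eB qfI qfE subr_ge0.
have H : 0 <= \sum_i \sum_j M i j * (x i 0 - x j 0) ^+ 2.
  by apply: sumr_ge0 => i _; apply: sumr_ge0 => j _; rewrite mulr_ge0 // sqr_ge0.
have E : \sum_i \sum_j M i j * (x i 0 - x j 0) ^+ 2 =
   \sum_i x i 0 ^+ 2 * (\sum_j M i j) + \sum_j x j 0 ^+ 2 * (\sum_i M i j)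
   - 2 * \sum_i \sum_j x i 0 * M i j * x j 0.
  have e1 : \sum_i x i 0 ^+ 2 * (\sum_j M i j) = \sum_i \sum_j M i j * x i 0 ^+ 2.
    by apply: eq_bigr => i _; rewrite mulr_sumr; apply: eq_bigr => j _; rewrite mulrC.
  have e2 : \sum_j x j 0 ^+ 2 * (\sum_i M i j) = \sum_i \sum_j M i j * x j 0 ^+ 2.
    rewrite exchange_big /=.
    by apply: eq_bigr => i _; rewrite mulr_sumr; apply: eq_bigr => j _; rewrite mulrC.
  have e3 : 2 * \sum_i \sum_j x i 0 * M i j * x j 0 = \sum_i \sum_j 2 * (x i 0 * M i j * x j 0).
    by rewrite mulr_sumr; apply: eq_bigr => i _; rewrite mulr_sumr.
  rewrite e1 e2 e3 -big_split -sumrB /=; apply: eq_bigr => i _.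
  rewrite -big_split -sumrB /=; apply: eq_bigr => j _.
  ring.
move: H; rewrite E.
have f1 : \sum_i x i 0 ^+ 2 * (\sum_j M i j) = \sum_i x i 0 ^+ 2.
  by apply: eq_bigr => i _; rewrite hrow mulr1.
have f2 : \sum_j x j 0 ^+ 2 * (\sum_i M i j) = \sum_i x i 0 ^+ 2.
  by apply: eq_bigr => i _; rewrite hcol mulr1.
rewrite f1 f2.
lra.
Qed.

Lemma eB1 (A B : 'M[R]_1) : (A - B) 0 0 = A 0 0 - B 0 0.
Proof. by rewrite !mxE. Qed.
Lemma eD1 (A B : 'M[R]_1) : (A + B) 0 0 = A 0 0 + B 0 0.
Proof. by rewrite !mxE. Qed.

Lemma trQ P : symmetric_mx P -> (1%:M - P)^T = 1%:M - P :> 'M[R]_m.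
Proof. by move=> h; rewrite linearB /= trmx1 h. Qed.

Lemma key P (y z : 'cV[R]_m) : symmetric_mx P -> stochastic P -> psd_mx P ->
  \sum_i ((1%:M - P) *m y) i 0 ^+ 2 <= \sum_i \sum_j P i j * (z i 0 - y j 0) ^+ 2.
Proof.
move=> hsym hst hpsd.
have [hnn hrow] := hst.
have hcol := colsum hst hsym.
set Q := 1%:M - P.
set A := (y^T *m y) 0 0.
set B := (y^T *m P *m y) 0 0.
set C := (y^T *m (P *m P) *m y) 0 0.
have hL : \sum_i (Q *m y) i 0 ^+ 2 = A - 2 * B + C.
  rewrite -sqE trmx_mul trQ // !mulmxA -[_ *m Q *m Q]mulmxA.
  rewrite /Q !(mulmxBl, mulmxBr) !mulmx1 mul1mx !eB1.
  rewrite -/A -/B -/C; lra.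
have hCB : C <= B.
  have h1 := hpsd (Q *m y).
  have h2 := psdIP hst hsym (P *m y).
  have e : B - C = ((Q *m y)^T *m P *m (Q *m y)) 0 0 + ((P *m y)^T *m Q *m (P *m y)) 0 0.
    rewrite -eD1 !trmx_mul trQ // hsym.
    rewrite /B /C -eB1; congr (_ 0 0).
    rewrite /Q !(mulmxBl, mulmxBr, mulmx1, mul1mx) !mulmxA.
    by rewrite subrK.
  move: h1 h2; rewrite -/Q; lra.
have hR : A - C <= \sum_i \sum_j P i j * (z i 0 - y j 0) ^+ 2.
  have eA : A = \sum_i \sum_j P i j * y j 0 ^+ 2.
    rewrite /A sqE exchange_big /=; apply: eq_bigr => j _.
    by rewrite -mulr_suml hcol mul1r.
  have eC : C = \sum_i (\sum_j P i j * y j 0) ^+ 2.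
    have -> : C = ((P *m y)^T *m (P *m y)) 0 0 by rewrite trmx_mul hsym /C !mulmxA.
    rewrite sqE; apply: eq_bigr => i _.
    by rewrite mxE.
  rewrite eA eC -sumrB; apply: ler_sum => i _.
  set w := \sum_j P i j * y j 0.
  have e : \sum_j P i j * (z i 0 - y j 0) ^+ 2 =
     z i 0 ^+ 2 * (\sum_j P i j) - 2 * z i 0 * w + \sum_j P i j * y j 0 ^+ 2.
    rewrite /w !mulr_sumr -sumrB -big_split /=; apply: eq_bigr => j _; ring.
  rewrite e hrow; have := sqr_ge0 (z i 0 - w); rewrite sqrrB; lra.
lra.
Qed.
End K.
Section N.
Variable R : realType.

Lemma lpn2 n (p : R) (x : 'cV[R]_n) : 0 < p ->
  lpnorm p x ^+ 2 = (\sum_k `|x k 0| `^ p) `^ (2 / p).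
Proof.
move=> p0; rewrite /lpnorm -powR_mulrn ?powR_ge0 // -powRrM mulrC //.
Qed.

Lemma term_le (c S s : R) : 0 <= c -> c <= S -> 1 <= s -> c `^ s <= c * S `^ (s - 1).
Proof.
move=> c0 cS s1.
have e : s = 1 + (s - 1) by ring.
rewrite {1}e (@powRD _ c 1 (s - 1)); last by apply/implyP => /eqP h; exfalso; lra.
rewrite powRr1 //; apply: ler_wpM2l => //; apply: ge0_ler_powR; rewrite ?nnegrE //; lra.
Qed.

Lemma powS (S s : R) : 0 <= S -> 1 <= s -> S * S `^ (s - 1) = S `^ s.
Proof.
move=> S0 s1.
have e : s = 1 + (s - 1) by ring.
rewrite {2}e (@powRD _ S 1 (s - 1)); last by apply/implyP => /eqP h; exfalso; lra.
by rewrite powRr1.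
Qed.

Lemma tangent (r mu t : R) : 1 < r -> 0 < mu -> 0 <= t ->
  r * mu `^ (r - 1) * t <= t `^ r + (r - 1) * mu `^ r.
Proof.
move=> r1 mu0 t0.
have r10 : 0 < r - 1 by lra.
set q := r / (r - 1).
have q0 : 0 < q by rewrite /q divr_gt0 //; lra.
have hq : r^-1 + q^-1 = 1.
  rewrite /q invf_div; field; do ?[apply/andP; split]; apply/eqP; lra.
have := conjugate_powR t0 (powR_ge0 mu (r - 1)) (lt_trans ltr01 r1) q0 hq.
rewrite -powRrM.
have -> : (r - 1) * q = r by rewrite /q; field; apply/eqP; lra.
set X := t `^ r; set Y := mu `^ r; set M := mu `^ (r - 1) => h.
have r0 : 0 < r by lra.
have h2 : r * (t * M) <= r * (X / r + Y / q) by rewrite ler_wpM2l //; lra.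
have e : r * (X / r + Y / q) = X + (r - 1) * Y.
  rewrite /q; field; do ?[apply/andP; split]; apply/eqP; lra.
rewrite e in h2; lra.
Qed.

Lemma sq_pow (a : R) : a ^+ 2 = `|a| `^ 2.
Proof. by rewrite -[2]/(2%:R) powR_mulrn // real_normK // num_real. Qed.

Lemma normineq n (p : R) (x : 'cV[R]_n) : 1 <= p ->
  \sum_k x k 0 ^+ 2 <= (Num.min 1 (n%:R `^ (2 / p - 1)))^-1 * lpnorm p x ^+ 2.
Proof.
move=> p1; have p0 : 0 < p by lra.
rewrite lpn2 //.
case: n x => [|n'] x;
set S := \sum_k `|x k 0| `^ p;
have S0 : 0 <= S by apply: sumr_ge0 => k _; apply: powR_ge0.
  rewrite big_ord0; apply: mulr_ge0; last exact: powR_ge0.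
  by rewrite invr_ge0 le_min ler01 powR_ge0.
set nR := n'.+1%:R.
have nR1 : 1 <= nR by rewrite /nR ler1n.
have nR0 : 0 < nR by lra.
have hS : forall k, `|x k 0| `^ p <= S.
  move=> k; rewrite /S (bigD1 k) //= lerDl; apply: sumr_ge0 => i _; exact: powR_ge0.
case: (lerP p 2) => hp.
  have s1 : 1 <= 2 / p by rewrite ler_pdivlMr // mul1r.
  have e0 : 0 <= 2 / p - 1 by lra.
  have : nR `^ 0 <= nR `^ (2 / p - 1) by apply: ler_powR.
  rewrite powRr0 => h1; rewrite min_l // invr1 mul1r.
  apply: (@le_trans _ _ (\sum_k `|x k 0| `^ p * S `^ (2 / p - 1))).
    apply: ler_sum => k _.
    have -> : x k 0 ^+ 2 = (`|x k 0| `^ p) `^ (2 / p).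
      by rewrite -powRrM sq_pow; congr (_ `^ _); field; apply/eqP; lra.
    by apply: term_le => //; apply: powR_ge0.
  by rewrite -mulr_suml powS.
have hp2 : 2 / p < 1 by rewrite ltr_pdivrMr // mul1r.
have : nR `^ (2 / p - 1) <= nR `^ 0 by apply: ler_powR => //; lra.
rewrite powRr0 => h1; rewrite min_r // -powRN.
set r := p / 2.
have r1 : 1 < r by rewrite /r ltr_pdivlMr // mul1r.
set T := \sum_k x k 0 ^+ 2.
have T0 : 0 <= T by apply: sumr_ge0 => k _; apply: sqr_ge0.
have RHS0 : 0 <= nR `^ (- (2 / p - 1)) * S `^ (2 / p) by apply: mulr_ge0; apply: powR_ge0.
case: (eqVneq T 0) => [->|Tn0] //.
have Tp : 0 < T by rewrite lt_def Tn0.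
set mu := T / nR.
have mu0 : 0 < mu by rewrite divr_gt0.
have hc : forall k, (x k 0 ^+ 2) `^ r = `|x k 0| `^ p.
  move=> k; rewrite sq_pow -powRrM; congr (_ `^ _); rewrite /r; by field.
have hsum : r * mu `^ (r - 1) * T <= S + nR * ((r - 1) * mu `^ r).
  rewrite /T mulr_sumr.
  apply: (@le_trans _ _ (\sum_k ((x k 0 ^+ 2) `^ r + (r - 1) * mu `^ r))).
    by apply: ler_sum => kk _; apply: tangent => //; apply: sqr_ge0.
  rewrite big_split /= sumr_const card_ord -mulr_natl.
  by rewrite (eq_bigr _ (fun k _ => hc k)) /S.
have eT : r * mu `^ (r - 1) * T = r * nR * mu `^ r.
  rewrite -(mulr_powRB1 (ltW mu0) (lt_trans ltr01 r1)) /mu; field; apply/eqP; lra.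
rewrite eT in hsum.
have hmu : mu `^ r <= S / nR.
  rewrite ler_pdivlMr //.
  have r0 : 0 < r by lra.
  have : r * (nR * mu `^ r) <= r * S by nra.
  by rewrite ler_pM2l // mulrC.
have hmu2 : mu <= (S / nR) `^ (2 / p).
  have <- : (mu `^ r) `^ (2 / p) = mu.
    rewrite -powRrM.
    have -> : r * (2 / p) = 1 by rewrite /r; field; apply/eqP; lra.
    by rewrite powRr1 // ltW.
  by apply: ge0_ler_powR; rewrite ?nnegrE ?powR_ge0 ?divr_ge0 // ?ltW.
have eT2 : T = nR * mu by rewrite /mu; field; apply/eqP; lra.
clearbody mu T; rewrite eT2.
have e3 : (S / nR) `^ (2 / p) = S `^ (2 / p) * nR `^ (- (2 / p)).
  rewrite powRM //; last by rewrite invr_ge0; lra.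
  by rewrite -(powR_inv1 (ltW nR0)) -powRrM mulN1r.
have e4 : nR `^ (- (2 / p - 1)) = nR * nR `^ (- (2 / p)).
  have -> : - (2 / p - 1) = 1 + (- (2 / p)) by ring.
  rewrite (@powRD _ nR 1 (- (2 / p))); last by apply/implyP => _; rewrite gt_eqF.
  by rewrite powRr1 // ltW.
rewrite e4 -mulrA; apply: ler_wpM2l; first lra.
by rewrite mulrC -e3.
Qed.
End N.

Lemma sum_tens (R : realType) m n (F : 'I_(m * n) -> R) :
  \sum_k F k = \sum_i \sum_l F (mxtens_index (i, l)).
Proof.
rewrite pair_big /=.
rewrite (reindex (@mxtens_index m n)) /=; last first.
  by exists (@mxtens_unindex m n) => k _; rewrite (mxtens_indexK, mxtens_unindexK).
by apply: eq_bigr => -[i l].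
Qed.

Lemma tens_entry (R : realType) m n (A : 'M[R]_m) (u : 'I_m -> 'cV[R]_n) i l :
  (tensmx A (1%:M : 'M[R]_n) *m stack u) (mxtens_index (i, l)) 0
  = \sum_j A i j * u j l 0.
Proof.
rewrite mxE sum_tens; apply: eq_bigr => j _.
rewrite (bigD1 l) //= big1.
  by rewrite tensmxE !mxE mxtens_indexK eqxx mulr1 addr0.
move=> l' hl'; rewrite tensmxE !mxE eq_sym (negbTE hl') /=; by rewrite mulr0 mul0r.
Qed.

Theorem lemma3 (R : realType) (m n : nat) (P : 'M[R]_m) (X : set 'cV[R]_n)
  (p : R) :
  symmetric_mx P -> stochastic P -> psd_mx P ->
  closed X -> convex_set X -> 1 <= p ->
  let sigma := Num.min 1 (n%:R `^ (2 / p - 1)) in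
  forall u v : 'I_m -> 'cV[R]_n,
    (forall i, X (u i)) -> (forall i, X (v i)) ->
    lpnorm 2 (tensmx (1%:M - P) (1%:M : 'M[R]_n) *m stack u) ^+ 2
    <= sigma^-1 * \sum_(i < m) \sum_(j < m) P i j * lpnorm p (v i - u j) ^+ 2.
Proof.
move=> hsym hst hpsd _ _ p1 sigma u v _ _.
have [hnn hrow] := hst.
rewrite lpn2 // divff // powRr1; last by apply: sumr_ge0 => k _; apply: powR_ge0.
under eq_bigr do rewrite -sq_pow.
rewrite sum_tens.
under eq_bigr do under eq_bigr do rewrite tens_entry.
rewrite exchange_big /=.
apply: (@le_trans _ _ (\sum_l \sum_i \sum_j P i j * (v i l 0 - u j l 0) ^+ 2)).
  apply: ler_sum => l _.
  have := key (\col_j u j l 0) (\col_i v i l 0) hsym hst hpsd.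
  have e1 : \sum_i ((1%:M - P) *m \col_j u j l 0) i 0 ^+ 2
      = \sum_i (\sum_j (1%:M - P) i j * u j l 0) ^+ 2.
    apply: eq_bigr => i _; rewrite [in LHS]mxE; apply: (congr1 (fun a => a ^+ 2)); apply: eq_bigr => j _; rewrite [(\col_j0 _) j 0]mxE; done.
  have e2 : \sum_i \sum_j P i j * ((\col_i v i l 0) i 0 - (\col_j u j l 0) j 0) ^+ 2
      = \sum_i \sum_j P i j * (v i l 0 - u j l 0) ^+ 2.
    by apply: eq_bigr => i _; apply: eq_bigr => j _; rewrite !mxE.
  by rewrite e1 e2.
rewrite exchange_big /= mulr_sumr; apply: ler_sum => i _.
rewrite exchange_big /= mulr_sumr; apply: ler_sum => j _.
rewrite -mulr_sumr mulrCA; apply: ler_wpM2l; first exact: hnn.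
have := normineq (v i - u j) p1.
by under eq_bigr do rewrite !mxE.
Qed.
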